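(* Let $H_1,\dots,H_K$ be half spaces in $\mathbb{R}^n$ such that the sets $H_i\cap B_2$, $i=1,\dots,K$, are pairwise disjoint. Then at most two of the half spaces $H_i$ intersect $B_1$.
   Context: $B_r$ denotes the open ball of radius $r$ centered at the origin in $\mathbb{R}^n$. *)

(* Defs.v *)
From mathcomp Require Import all_boot all_order all_algebra.
From mathcomp Require Import boolp classical_sets.
Set Implicit Arguments. Unset Strict Implicit. Unset Printing Implicit Defensive.
Import Order.TTheory GRing.Theory Num.Theory.
Local Open Scope ring_scope.
Local Open Scope classical_set_scope.

Definition dotv (R : rcfType) (n : nat) (u v : 'rV[R]_n) : R :=
  \sum_(i < n) u ord0 i * v ord0 i.

Definition enorm (R : rcfType) (n : nat) (x : 'rV[R]_n) : R :=
  Num.sqrt (dotv x x).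

Definition oball (R : rcfType) (n : nat) (r : R) : set 'rV[R]_n :=
  [set x | enorm x < r].

Definition halfspace (R : rcfType) (n : nat) (H : set 'rV[R]_n) : Prop :=
  exists (a : 'rV[R]_n) (b : R), a != 0 /\ H = [set x | b <= dotv a x].

(* Main.v *)
Require Import Defs.
From mathcomp Require Import all_boot all_order all_algebra.
From mathcomp Require Import boolp classical_sets.
From mathcomp Require Import ring lra.
Import Order.TTheory GRing.Theory Num.Theory.
Local Open Scope ring_scope.
Local Open Scope classical_set_scope.

Section Aux.
Variables (R : rcfType) (n : nat).
Implicit Types (u v w x y : 'rV[R]_n).

Lemma dotvC u v : dotv u v = dotv v u.
Proof. by apply: eq_bigr => i _; rewrite mulrC. Qed.

Lemma dotvDl u v w : dotv (u + v) w = dotv u w + dotv v w.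
Proof. by rewrite /dotv -big_split; apply: eq_bigr => i _; rewrite !mxE mulrDl. Qed.

Lemma dotvZl (k : R) u w : dotv (k *: u) w = k * dotv u w.
Proof. by rewrite /dotv mulr_sumr; apply: eq_bigr => i _; rewrite !mxE mulrA. Qed.

Lemma dotvNl u w : dotv (- u) w = - dotv u w.
Proof. by rewrite -scaleN1r dotvZl mulN1r. Qed.

Lemma dotv0l w : dotv 0 w = 0.
Proof. by rewrite /dotv big1 // => i _; rewrite mxE mul0r. Qed.

Lemma dotv_ge0 u : 0 <= dotv u u.
Proof. by apply: sumr_ge0 => i _; rewrite -expr2 sqr_ge0. Qed.

Lemma dotv_gt0 u : u != 0 -> 0 < dotv u u.
Proof.
move=> hu; rewrite lt_neqAle dotv_ge0 andbT eq_sym; apply/negP => /eqP h0.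
move/negP: hu; apply; apply/eqP/matrixP => i j; rewrite mxE (ord1 i).
have hg : forall k : 'I_n, predT k -> 0 <= u ord0 k * u ord0 k.
  by move=> k _; rewrite -expr2 sqr_ge0.
have := psumr_eq0P hg h0 (i:=j) isT.
by move/eqP; rewrite mulf_eq0 orbb => /eqP.
Qed.

Lemma normalize (H : set 'rV[R]_n) : halfspace H ->
  exists u (b : R), dotv u u = 1 /\ forall x, H x <-> b <= dotv u x.
Proof.
case=> a [b [a0 ->]].
have hp := dotv_gt0 a a0.
set s := Num.sqrt (dotv a a).
have s0 : 0 < s by rewrite sqrtr_gt0.
have ss : s ^+ 2 = dotv a a by rewrite sqr_sqrtr // ltW.
exists (s^-1 *: a), (b / s); split.
  rewrite dotvZl dotvC dotvZl -ss; field; exact: lt0r_neq0.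
move=> x /=; rewrite dotvZl [b / s]mulrC ler_pM2l ?invr_gt0 //.
Qed.

Lemma in_ball1 x : enorm x < 1 -> dotv x x < 1.
Proof.
rewrite /enorm -{1}sqrtr1 ltr_sqrt //.
Qed.

Lemma in_ball2 x : dotv x x < 4 -> enorm x < 2.
Proof.
move=> h; rewrite /enorm.
have -> : (2 : R) = Num.sqrt 4.
  by rewrite (_ : 4 = (2:R) ^+ 2) ?sqrtr_sqr ?ger0_norm // expr2; lra.
by rewrite ltr_sqrt.
Qed.


Lemma dotvDr u v w : dotv w (u + v) = dotv w u + dotv w v.
Proof. by rewrite dotvC dotvDl !(dotvC w). Qed.

Lemma dotvZr (k : R) u w : dotv w (k *: u) = k * dotv w u.
Proof. by rewrite dotvC dotvZl dotvC. Qed.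

Lemma dotvNr u w : dotv w (- u) = - dotv w u.
Proof. by rewrite dotvC dotvNl dotvC. Qed.

Lemma b_lt1 u x (b : R) : dotv u u = 1 -> b <= dotv u x -> dotv x x < 1 -> b < 1.
Proof.
move=> hu hb hx.
have := dotv_ge0 (u - x).
rewrite dotvDl !dotvDr !dotvNl !dotvNr hu (dotvC x u).
lra.
Qed.

Lemma pair_neg u v (bu bv : R) : dotv u u = 1 -> dotv v v = 1 -> bu < 1 -> bv < 1 ->
  (forall y, bu <= dotv u y -> bv <= dotv v y -> dotv y y < 4 -> False) ->
  dotv u v < - (1/2).
Proof.
move=> hu hv hbu hbv hno.
rewrite ltNge; apply/negP => hc.
set c := dotv u v in hc.
set be := Num.max (Num.max bu bv) 0.
have hb1 : be < 1 by rewrite !gt_max hbu hbv ltr01.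
have hb0 : 0 <= be by rewrite le_max lexx orbT.
have hbu' : bu <= be by rewrite !le_max lexx.
have hbv' : bv <= be by rewrite !le_max lexx orbT.
have c1 : 0 < 1 + c by lra.
set t := (1 + c)^-1.
have ht : t * (1 + c) = 1 by rewrite mulVf // gt_eqF.
have ht0 : 0 < t by rewrite invr_gt0.
apply: (hno ((be * t) *: (u + v))).
- rewrite dotvZr dotvDr hu -/c -mulrA ht mulr1 //.
- rewrite dotvZr dotvDr hv (dotvC v u) -/c addrC -mulrA ht mulr1 //.
- rewrite dotvZl dotvZr dotvDl !dotvDr hu hv (dotvC v u) -/c.
  have e : be * t * (be * t * (1 + c + (c + 1))) = 2 * be * be * t * (t * (1 + c)).
    ring.
  rewrite e ht mulr1.
  have t2 : t <= 2 by nra.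
  nra.
Qed.


Lemma meet_b (H1 : set 'rV[R]_n) u (b : R) : dotv u u = 1 ->
  (forall x, H1 x <-> b <= dotv u x) -> H1 `&` oball 1 !=set0 -> b < 1.
Proof.
move=> hu hH [x [/hH hx /in_ball1 hb]]; exact: (@b_lt1 _ _ _ hu hx hb).
Qed.

Lemma pair_key (H1 H2 : set 'rV[R]_n) u1 u2 (b1 b2 : R) :
  dotv u1 u1 = 1 -> dotv u2 u2 = 1 ->
  (forall x, H1 x <-> b1 <= dotv u1 x) -> (forall x, H2 x <-> b2 <= dotv u2 x) ->
  (H1 `&` oball 2) `&` (H2 `&` oball 2) = set0 ->
  H1 `&` oball 1 !=set0 -> H2 `&` oball 1 !=set0 -> dotv u1 u2 < - (1/2).
Proof.
move=> h1 h2 e1 e2 hd m1 m2.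
apply: (@pair_neg _ _ _ _ h1 h2 (@meet_b _ _ _ h1 e1 m1) (@meet_b _ _ _ h2 e2 m2)) => y y1 y2 yy.
have : ((H1 `&` oball 2) `&` (H2 `&` oball 2)) y.
  have yb : oball 2 y by rewrite /oball /=; exact: in_ball2.
  by split; split => //; [apply/e1 | apply/e2].
by rewrite hd.
Qed.

End Aux.

Theorem lemma4p9 (R : rcfType) (n K : nat) (H : 'I_K -> set 'rV[R]_n)
  (hH : forall i, halfspace (H i))
  (hdisj : forall i j : 'I_K, i != j ->
     (H i `&` (@oball R n 2)) `&` (H j `&` (@oball R n 2)) = set0) :
  (#|[set i : 'I_K | `[< H i `&` (@oball R n 1) !=set0 >]]| <= 2)%N.
Proof.
rewrite leqNgt; apply/negP => /card_gt2P [i [j [k [[hi hj hk] [hij hjk hki]]]]].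
move: hi hj hk; rewrite !inE => /asboolP hi /asboolP hj /asboolP hk.
have [ui [bi [ni ei]]] := @normalize _ _ _ (hH i).
have [uj [bj [nj ej]]] := @normalize _ _ _ (hH j).
have [uk [bk [nk ek]]] := @normalize _ _ _ (hH k).
have cij := @pair_key _ _ _ _ _ _ _ _ ni nj ei ej (hdisj _ _ hij) hi hj.
have cjk := @pair_key _ _ _ _ _ _ _ _ nj nk ej ek (hdisj _ _ hjk) hj hk.
have cki := @pair_key _ _ _ _ _ _ _ _ nk ni ek ei (hdisj _ _ hki) hk hi.
have := @dotv_ge0 _ _ (ui + uj + uk).
rewrite !dotvDl !dotvDr ni nj nk (@dotvC _ _ uj ui) (@dotvC _ _ uk uj) (@dotvC _ _ ui uk).
lra.
Qed.
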